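(* Let $T \ge 2$ and let $R_0, \ldots, R_{T-1}$ be real matrices with $R_t \in \mathbb R^{q_t \times n}$, such that the row space of $R_t$ contains the row space of $R_{t+1}$ for $t = 0, \ldots, T-2$. For vectors $\sigma_{t+1|0} \in \mathbb R^{q_{t+1}}$, $t = 0, \ldots, T-2$, define $\sigma_{t|1} := (R_t')^+ R_{t+1}' \sigma_{t+1|0}$ for $t = 0,\ldots,T-2$ and $$\pi_6 := \frac14 \sum_{t=0}^{T-2} \big(|\sigma_{t+1|0}|^2 - |\sigma_{t|1}|^2\big).$$ Then $\pi_6 \ge 0$ for all $\sigma_{1|0}, \ldots, \sigma_{T-1|0}$ if and only if $\|R_{t+1} R_t^+\| \le 1$ for $t = 0, \ldots, T-2$.
   Context: For a matrix $M$, $M'$ is its transpose, $M^+$ its Moore–Penrose pseudoinverse, and $\|M\|$ its maximum singular value. $|\cdot|$ is the Euclidean norm. *)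

(* Defs.v *)
From HB Require Import structures.
From mathcomp Require Import all_boot all_order all_algebra.
From mathcomp Require Import boolp classical_sets reals.
Set Implicit Arguments. Unset Strict Implicit. Unset Printing Implicit Defensive.
Import Order.TTheory GRing.Theory Num.Theory.
Local Open Scope ring_scope.
Local Open Scope classical_set_scope.

Definition penrose {R : realType} {m n : nat}
  (A : 'M[R]_(m, n)) (X : 'M[R]_(n, m)) : Prop :=
  [/\ A *m X *m A = A, X *m A *m X = X,
      (A *m X)^T = A *m X & (X *m A)^T = X *m A].

Definition mpinv {R : realType} {m n : nat} (A : 'M[R]_(m, n)) : 'M[R]_(n, m) :=
  xget 0 [set X | penrose A X].

Definition sqnorm {R : realType} {k : nat} (v : 'cV[R]_k) : R :=
  \sum_(i < k) v i 0 ^+ 2.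

Definition enorm {R : realType} {k : nat} (v : 'cV[R]_k) : R :=
  Num.sqrt (sqnorm v).

(* Spectral norm ||M|| (maximum singular value) = sup_{|x| <= 1} |M x|. *)
Definition opnorm {R : realType} {m n : nat} (M : 'M[R]_(m, n)) : R :=
  sup [set enorm (M *m x) | x in [set x : 'cV[R]_n | enorm x <= 1]].

Definition sigma1 {R : realType} {n : nat} (q : nat -> nat)
  (Rm : forall t : nat, 'M[R]_(q t, n)) (s0 : forall t : nat, 'cV[R]_(q t.+1))
  (t : nat) : 'cV[R]_(q t) :=
  mpinv (Rm t)^T *m ((Rm t.+1)^T *m s0 t).

Definition pi6 {R : realType} {n : nat} (T : nat) (q : nat -> nat)
  (Rm : forall t : nat, 'M[R]_(q t, n)) (s0 : forall t : nat, 'cV[R]_(q t.+1)) : R :=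
  4^-1 * \sum_(t < T.-1) (sqnorm (s0 t) - sqnorm (sigma1 Rm s0 t)).

(* Main.v *)
Require Import Defs.
From HB Require Import structures.
From mathcomp Require Import all_boot all_order all_algebra.
From mathcomp Require Import boolp classical_sets reals.
Import Order.TTheory GRing.Theory Num.Theory.
Local Open Scope ring_scope.

From mathcomp Require Import ring lra zify.
Set Implicit Arguments. Unset Strict Implicit.
Lemma penrose_tr (R : realType) m n (A : 'M[R]_(m, n)) X :
  penrose A X -> penrose A^T X^T.
Proof.
case=> h1 h2 h3 h4; split.
- by rewrite -!trmx_mul mulmxA h1.
- by rewrite -!trmx_mul mulmxA h2.
- by rewrite -trmx_mul trmxK h4.
- by rewrite -trmx_mul trmxK h3.
Qed.

Lemma penrose_uniq (R : realType) m n (A : 'M[R]_(m, n)) X Y :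
  penrose A X -> penrose A Y -> X = Y.
Proof.
case=> h1 h2 h3 h4 [k1 k2 k3 k4].
have e1 : X = X *m (X^T *m A^T) by rewrite -trmx_mul h3 mulmxA h2.
have e2 : A^T = A^T *m (A *m Y)^T by rewrite -trmx_mul k1.
have eX : X = X *m A *m Y.
  rewrite {1}e1 e2 [X^T *m _]mulmxA -trmx_mul h3 k3 !mulmxA h2 //.
have f1 : Y = A^T *m Y^T *m Y by rewrite -trmx_mul k4 k2.
have f2 : A^T = (X *m A)^T *m A^T by rewrite -trmx_mul mulmxA h1.
have eY : Y = X *m A *m Y.
  rewrite {1}f1 f2 -[(X *m A)^T *m A^T *m Y^T]mulmxA -trmx_mul h4 k4.
  by rewrite -!mulmxA [Y *m (A *m Y)]mulmxA k2.
by rewrite -eX in eY.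
Qed.

Arguments penrose_tr {R m n A X}.
Arguments penrose_uniq {R m n A X Y}.

Lemma mpinv_tr (R : realType) m n (A : 'M[R]_(m, n)) :
  mpinv A^T = (mpinv A)^T.
Proof.
have [[X hX]|nX] := pselect (exists X, penrose A X).
  have hA : penrose A (mpinv A).
    exact: (xgetPex 0 (P := [set X | penrose A X]) (ex_intro _ X hX)).
  have hT := penrose_tr hA.
  apply: xget_unique => // Y hY; exact: penrose_uniq hY hT.
have -> : mpinv A = 0 by apply: xgetPN => Y hY; apply: nX; exists Y.
rewrite trmx0; apply: xgetPN => Y hY; apply: nX; exists Y^T.
by rewrite -[A]trmxK; apply: penrose_tr.
Qed.
Section Norms.
Variable R : realType.

Definition dot {k} (u v : 'cV[R]_k) : R := (u^T *m v) 0 0.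

Lemma dotE k (u v : 'cV[R]_k) : dot u v = \sum_i u i 0 * v i 0.
Proof. by rewrite /dot mxE; apply: eq_bigr => i _; rewrite mxE. Qed.

Lemma sqnorm_dot k (u : 'cV[R]_k) : sqnorm u = dot u u.
Proof. by rewrite dotE /sqnorm; apply: eq_bigr => i _; rewrite expr2. Qed.

Lemma dot_tr a b (M : 'M[R]_(a, b)) y z : dot (M^T *m y) z = dot y (M *m z).
Proof. by rewrite /dot trmx_mul trmxK mulmxA. Qed.

Lemma dot_le k (u v : 'cV[R]_k) : 2 * dot u v <= sqnorm u + sqnorm v.
Proof.
rewrite dotE /sqnorm mulr_sumr -big_split; apply: ler_sum => i _ /=.
set x := u i 0; set y := v i 0.
rewrite -subr_ge0; have -> : x^+2+y^+2 - 2*(x*y) = (x-y)^+2 by ring.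
exact: sqr_ge0.
Qed.

Lemma sqnorm_ge0 k (u : 'cV[R]_k) : 0 <= sqnorm u.
Proof. by apply: sumr_ge0 => i _; exact: sqr_ge0. Qed.

Lemma tr_contract a b (M : 'M[R]_(a, b)) :
  (forall x, sqnorm (M *m x) <= sqnorm x) ->
  forall y, sqnorm (M^T *m y) <= sqnorm y.
Proof.
move=> H y; set z := M^T *m y.
have e : sqnorm z = dot y (M *m z) by rewrite sqnorm_dot /z dot_tr.
have := dot_le y (M *m z); have := H z; lra.
Qed.

Lemma sqnormZ k c (x : 'cV[R]_k) : sqnorm (c *: x) = c ^+ 2 * sqnorm x.
Proof. by rewrite /sqnorm mulr_sumr; apply: eq_bigr => i _; rewrite mxE exprMn. Qed.

Lemma sqnorm_eq0 k (x : 'cV[R]_k) : sqnorm x = 0 -> x = 0.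
Proof.
move=> h; apply/matrixP => i j; rewrite (ord1 j) mxE.
have := @psumr_eq0P _ _ xpredT (fun i => x i 0 ^+ 2) (fun i _ => sqr_ge0 (x i 0)) h i isT.
by move/eqP; rewrite sqrf_eq0 => /eqP.
Qed.

Lemma sqnorm0 k : sqnorm (0 : 'cV[R]_k) = 0.
Proof. by rewrite /sqnorm big1 // => i _; rewrite mxE expr0n. Qed.

Lemma coord_le k (x : 'cV[R]_k) j : x j 0 ^+ 2 <= sqnorm x.
Proof.
rewrite /sqnorm (bigD1 j) //= lerDl; apply: sumr_ge0 => i _; exact: sqr_ge0.
Qed.

Lemma enorm_le1 k (x : 'cV[R]_k) : (enorm x <= 1) = (sqnorm x <= 1).
Proof. by rewrite /enorm -(sqrtr1 R) ler_sqrt // sqrtr1. Qed.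

Lemma bounded a b (M : 'M[R]_(a, b)) :
  exists C, forall x, sqnorm x <= 1 -> sqnorm (M *m x) <= C.
Proof.
exists (\sum_i (\sum_j `|M i j|) ^+ 2) => x hx.
apply: ler_sum => i _; rewrite mxE.
have hb : `|\sum_j M i j * x j 0| <= \sum_j `|M i j|.
  apply: le_trans (ler_norm_sum _ _ _) _; apply: ler_sum => j _.
  rewrite normrM -[X in _ <= X]mulr1; apply: ler_wpM2l => //.
  have h2 := le_trans (coord_le x j) hx.
  rewrite -(real_normK (num_real (x j 0))) expr2 in h2.
  have := normr_ge0 (x j 0); nra.
rewrite -(real_normK (num_real (\sum_j M i j * x j 0))) !expr2.
by apply: ler_pM => //; exact: normr_ge0.
Qed.

Lemma opnorm_le1 a b (M : 'M[R]_(a, b)) :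
  opnorm M <= 1 <-> forall x, sqnorm (M *m x) <= sqnorm x.
Proof.
split => [h x | h].
- have [C hC] := bounded M.
  have hs : has_sup [set enorm (M *m x) | x in [set x : 'cV[R]_b | enorm x <= 1]].
    split; first by exists (enorm (M *m 0)), 0 => //=; rewrite enorm_le1 /sqnorm big1 // => i _; rewrite mxE expr0n.
    exists (Num.sqrt C) => _ [y /= hy <-]; rewrite /enorm ler_sqrt.
      by apply: hC; rewrite -enorm_le1.
    by apply: le_trans (hC y _); [exact: sqnorm_ge0 | rewrite -enorm_le1].
  have ub := sup_upper_bound hs.
  have key : forall y : 'cV[R]_b, sqnorm y <= 1 -> sqnorm (M *m y) <= 1.
    move=> y hy; rewrite -enorm_le1; apply: le_trans h.
    by apply: ub; exists y => //=; rewrite enorm_le1.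
  have [x0|nx0] := eqVneq (sqnorm x) 0.
    by rewrite (sqnorm_eq0 x0) mulmx0 !sqnorm0.
  have sp : 0 < sqnorm x by rewrite lt_def nx0 sqnorm_ge0.
  set c := (Num.sqrt (sqnorm x))^-1.
  have c2 : c ^+ 2 = (sqnorm x)^-1 by rewrite /c exprVn sqr_sqrtr // ltW.
  have := key (c *: x); rewrite -scalemxAr !sqnormZ c2 mulVf // lexx => /(_ isT).
  by rewrite mulrC ler_pdivrMr // mul1r.
- apply: ge_sup.
    by exists (enorm (M *m 0)), 0 => //=; rewrite enorm_le1 /sqnorm big1 // => i _; rewrite mxE expr0n.
  move=> _ [y /= hy <-]; rewrite enorm_le1; apply: le_trans (h y) _.
  by rewrite -enorm_le1.
Qed.
End Norms.

Definition pick_at (R : realType) (q : nat -> nat) (t : nat) (s : 'cV[R]_(q t.+1)) :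
  forall u, 'cV[R]_(q u.+1) :=
  fun u => if t =P u is ReflectT e then ecast u ('cV[R]_(q u.+1)) e s else 0.

Lemma pick_at_eq R q t s : @pick_at R q t s t = s.
Proof. by rewrite /pick_at; case: eqP => // e; rewrite eq_axiomK. Qed.

Lemma pick_at_ne R q t s u : u != t -> @pick_at R q t s u = 0.
Proof. move=> h; rewrite /pick_at; case: eqP => // e; exfalso; by rewrite e eqxx in h. Qed.

Lemma sigma1E (R : realType) n q (Rm : forall t : nat, 'M[R]_(q t, n)) s0 t :
  sigma1 Rm s0 t = (Rm t.+1 *m mpinv (Rm t))^T *m s0 t.
Proof. by rewrite /sigma1 mpinv_tr mulmxA -trmx_mul. Qed.

Theorem proposition3 (R : realType) (T n : nat) (q : nat -> nat)
  (Rm : forall t : nat, 'M[R]_(q t, n)) :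
  (2 <= T)%N ->
  (forall t : nat, (t <= T - 2)%N -> (Rm t.+1 <= Rm t)%MS) ->
  ((forall s0 : forall t : nat, 'cV[R]_(q t.+1), 0 <= pi6 T Rm s0) <->
   (forall t : nat, (t <= T - 2)%N -> opnorm (Rm t.+1 *m mpinv (Rm t)) <= 1)).
Proof.
move=> hT _; split.
- move=> H t ht; apply/opnorm_le1.
  suff: forall s, sqnorm ((Rm t.+1 *m mpinv (Rm t))^T *m s) <= sqnorm s.
    by move/tr_contract; rewrite trmxK.
  move=> s; have := H (pick_at s); rewrite /pi6.
  have ht' : (t < T.-1)%N by lia.
  rewrite (bigD1 (Ordinal ht')) //= big1 ?addr0 => [|[u hu] /= hne]; last first.
    have hut : u != t by apply: contraNneq hne => e; apply/eqP/val_inj.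
    by rewrite sigma1E pick_at_ne // mulmx0 !sqnorm0 subrr.
  rewrite sigma1E pick_at_eq pmulr_rge0 ?subr_ge0 //.
  by rewrite invr_gt0.
- move=> H s0; rewrite /pi6; apply: mulr_ge0; first by rewrite invr_ge0.
  apply: sumr_ge0 => [[t ht]] _ /=; rewrite sigma1E subr_ge0.
  apply: tr_contract; apply/opnorm_le1; apply: H; lia.
Qed.
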